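(* Let $G(x,y)=g(\rho(x,y))$ be the Green's function (fundamental solution) of the Paneitz operator $P_2$ on $\mathbb{H}^3$. Then $g(\rho)>0$ for all $\rho>0$, and $g$ is strictly monotonically decreasing in the geodesic distance $\rho\in(0,\infty)$.
   Context: $\mathbb{H}^3$ is 3-dimensional hyperbolic space with geodesic distance $\rho$ and Laplace–Beltrami operator $\Delta_{\mathbb{H}}$. $P_1=-\Delta_{\mathbb{H}}-\frac34$ and $P_2=P_1(P_1+2)$. The Green's function $G=P_2^{-1}$ is the (decaying) fundamental solution of $P_2$, which depends only on $\rho(x,y)$. *)

(* Defs.v *)
From Stdlib Require Export Reals.
From Coquelicot Require Export Coquelicot.
Open Scope R_scope.

(* Radial part of the Laplace-Beltrami operator on H^3 (curvature -1):
   for f = f(rho), Delta_H f = f'' + 2 coth(rho) f'  (volume element 4 pi sinh^2 rho drho). *)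
Definition radial_lap (f : R -> R) : R -> R :=
  fun r => Derive_n f 2 r + 2 * (cosh r / sinh r) * Derive f r.

Definition P1 (f : R -> R) : R -> R :=
  fun r => - radial_lap f r - 3 / 4 * f r.

Definition P2 (f : R -> R) : R -> R :=
  P1 (fun r => P1 f r + 2 * f r).

(* g is the radial profile of the (decaying) Green's function G = P_2^{-1} on H^3,
   G(x,y) = g(rho(x,y)):
   - g is smooth on (0, oo) and P_2 G(x,.) = 0 away from the pole;
   - G(x,.) is locally bounded at the pole (no 1/rho singularity, as forced by
     P_2 G = delta for a 4th-order operator in dimension 3);
   - delta normalization: the flux of grad(Delta G) through the geodesic sphere
     of radius r (area 4 pi sinh^2 r) tends to 1 as r -> 0+, i.e. P_2 G = delta_x;
   - decay: G(x,.) is L^2 away from the pole (integral of g^2 * 4 pi sinh^2 over [1,oo)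
     is finite), i.e. G is the inverse of P_2 on L^2(H^3). *)
Definition is_green_P2 (g : R -> R) : Prop :=
  (forall (n : nat) (r : R), 0 < r -> ex_derive_n g n r) /\
  (forall r : R, 0 < r -> P2 g r = 0) /\
  (exists M : R, forall r : R, 0 < r <= 1 -> Rabs (g r) <= M) /\
  filterlim (fun r => 4 * PI * (sinh r) ^ 2 * Derive (radial_lap g) r)
            (at_right 0) (locally 1) /\
  ex_RInt_gen (fun r => (g r) ^ 2 * (sinh r) ^ 2) (at_point 1) (Rbar_locally p_infty).

(* Main.v *)
Require Import Defs.
From Stdlib Require Import Reals Lra.
From Coquelicot Require Import Coquelicot.
Open Scope R_scope.


Lemma sinh_pos y : 0 < y -> 0 < sinh y.
Proof. intros. unfold sinh. assert (exp (-y) < exp y) by (apply exp_increasing; lra). lra. Qed.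

Lemma Deta f r l : is_derive f r l -> Derive (fun x => f x) r = l.
Proof. intros H. apply is_derive_unique. exact H. Qed.

Lemma ch2 y : cosh y * cosh y = 1 + sinh y * sinh y.
Proof. unfold cosh, sinh. rewrite exp_Ropp. pose proof (exp_pos y). field. lra. Qed.

Section S.
Variables g0 g1 g2 g3 g4 : R -> R.
Hypothesis d0 : forall r, 0 < r -> is_derive g0 r (g1 r).
Hypothesis d1 : forall r, 0 < r -> is_derive g1 r (g2 r).
Hypothesis d2 : forall r, 0 < r -> is_derive g2 r (g3 r).
Hypothesis d3 : forall r, 0 < r -> is_derive g3 r (g4 r).

Definition hh z := -(g2 z + 2*(cosh z/sinh z)*g1 z) - 3/4*g0 z + 2*g0 z.
Definition H1 z := -(g3 z + 2*(cosh z/sinh z)*g2 z - 2/(sinh z)^2 * g1 z) + 5/4*g1 z.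
Definition H2 z := -(g4 z + 2*(cosh z/sinh z)*g3 z - 4/(sinh z)^2*g2 z + 4*cosh z/(sinh z)^3 * g1 z) + 5/4*g2 z.

Ltac fin y Hy := rewrite ?(Deta _ _ _ (d0 y Hy)), ?(Deta _ _ _ (d1 y Hy)), ?(Deta _ _ _ (d2 y Hy)), ?(Deta _ _ _ (d3 y Hy));
  let Hs := fresh in pose proof (sinh_pos y Hy) as Hs;
  unfold sinh, cosh in *; rewrite ?exp_Ropp in *;
  let E := fresh "E" in let HE := fresh in pose proof (exp_pos y) as HE; set (E := exp y) in *;
  assert (E - / E <> 0) by lra;
  assert (E * E - 1 <> 0) by (replace (E*E-1) with (E * (E - /E)) by (field; lra); apply Rmult_integral_contrapositive; split; lra);
  field; repeat split; lra.

Ltac side := repeat split; try (eexists; eauto);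
  try solve [lra | (apply Rgt_not_eq; apply Rlt_gt; repeat (match goal with |- 0 < _ * _ => apply Rmult_lt_0_compat | |- 0 < _ ^ _ => apply pow_lt end); lra)].

Lemma hh_d y : 0 < y -> is_derive hh y (H1 y).
Proof. intros Hy. pose proof (sinh_pos y Hy).
  unfold hh, H1. auto_derive.
  - side.
  - fin y Hy.
Qed.

Lemma H1_d y : 0 < y -> is_derive H1 y (H2 y).
Proof. intros Hy. pose proof (sinh_pos y Hy).
  unfold H1, H2. auto_derive.
  - side.
  - fin y Hy.
Qed.

Lemma loc_pos y : 0 < y -> locally y (fun z => 0 < z).
Proof. intros Hy. exists (mkposreal y Hy). intros z Hz.
  change (Rabs (z - y) < y) in Hz. apply Rabs_lt_between in Hz. lra. Qed.

Lemma P1hh y : 0 < y -> P1 hh y = -(H2 y + 2*(cosh y/sinh y)*H1 y) - 3/4*hh y.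
Proof. intros Hy. unfold P1, radial_lap.
  replace (Derive hh y) with (H1 y) by (symmetry; apply is_derive_unique, hh_d; auto).
  replace (Derive_n hh 2 y) with (H2 y). reflexivity.
  symmetry. simpl. rewrite (Derive_ext_loc _ H1).
  apply is_derive_unique, H1_d; auto.
  generalize (loc_pos y Hy). apply filter_imp. intros z Hz.
  apply is_derive_unique, hh_d; auto.
Qed.

Definition U0 z := sinh z * g0 z.
Definition U1 z := cosh z * g0 z + sinh z * g1 z.
Definition U2 z := sinh z * g0 z + 2 * cosh z * g1 z + sinh z * g2 z.
Definition U3 z := cosh z * g0 z + 3 * sinh z * g1 z + 3 * cosh z * g2 z + sinh z * g3 z.
Definition U4 z := sinh z * g0 z + 4 * cosh z * g1 z + 6 * sinh z * g2 z + 4 * cosh z * g3 z + sinh z * g4 z.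

Lemma U0_d y : 0 < y -> is_derive U0 y (U1 y).
Proof. intros Hy. unfold U0, U1. auto_derive. repeat split; try (eexists; eauto). fin y Hy. Qed.
Lemma U1_d y : 0 < y -> is_derive U1 y (U2 y).
Proof. intros Hy. unfold U1, U2. auto_derive. repeat split; try (eexists; eauto). fin y Hy. Qed.
Lemma U2_d y : 0 < y -> is_derive U2 y (U3 y).
Proof. intros Hy. unfold U2, U3. auto_derive. repeat split; try (eexists; eauto). fin y Hy. Qed.
Lemma U3_d y : 0 < y -> is_derive U3 y (U4 y).
Proof. intros Hy. unfold U3, U4. auto_derive. repeat split; try (eexists; eauto). fin y Hy. Qed.

Lemma key_id y : 0 < y -> sinh y * (-(H2 y + 2*(cosh y/sinh y)*H1 y) - 3/4*hh y) = U4 y - 5/2 * U2 y + 9/16 * U0 y.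
Proof. intros Hy. unfold H2, H1, hh, U4, U2, U0. fin y Hy. Qed.

Definition LL z := g3 z + 2*(cosh z/sinh z)*g2 z - 2/(sinh z)^2 * g1 z.
Lemma rl_d y : 0 < y -> is_derive (fun z => g2 z + 2*(cosh z/sinh z)*g1 z) y (LL y).
Proof. intros Hy. pose proof (sinh_pos y Hy). unfold LL. auto_derive.
  - side.
  - fin y Hy.
Qed.
Lemma flux_id y : 0 < y -> sinh y ^ 2 * LL y = (U3 y - U1 y) * sinh y - (U2 y - U0 y) * cosh y.
Proof. intros Hy. unfold LL, U3, U2, U1, U0. fin y Hy. Qed.
End S.




Section O.
Variables u0 u1 u2 u3 u4 : R -> R.
Hypothesis e0 : forall r, 0 < r -> is_derive u0 r (u1 r).
Hypothesis e1 : forall r, 0 < r -> is_derive u1 r (u2 r).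
Hypothesis e2 : forall r, 0 < r -> is_derive u2 r (u3 r).
Hypothesis e3 : forall r, 0 < r -> is_derive u3 r (u4 r).
Hypothesis ode : forall r, 0 < r -> u4 r - 5/2 * u2 r + 9/16 * u0 r = 0.

Definition Qf (l : R) z := exp (-(l*z)) * (u3 z + l*u2 z + (l^2-5/2)*u1 z + (l^3-5/2*l)*u0 z).

Lemma Qf_d l (hl : l^4 - 5/2*l^2 + 9/16 = 0) x : 0 < x -> is_derive (Qf l) x 0.
Proof. intros Hx. unfold Qf. auto_derive.
  - repeat split; eexists; eauto.
  - rewrite (Deta _ _ _ (e0 x Hx)), (Deta _ _ _ (e1 x Hx)), (Deta _ _ _ (e2 x Hx)), (Deta _ _ _ (e3 x Hx)).
    assert (u4 x = 5/2 * u2 x - 9/16 * u0 x) as Hu by (pose proof (ode x Hx); lra).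
    rewrite Hu.
    transitivity (exp (-(l*x)) * u0 x * -(l^4 - 5/2*l^2 + 9/16)). ring.
    rewrite hl. ring.
Qed.

Lemma Qf_const l (hl : l^4 - 5/2*l^2 + 9/16 = 0) r : 0 < r -> Qf l r = Qf l 1.
Proof. intros Hr.
  destruct (MVT_gen (Qf l) 1 r (fun _ => 0)) as [c [_ Hc]].
  - intros x Hx. apply Qf_d; auto.
    assert (0 < Rmin 1 r) by (apply Rmin_glb_lt; lra). lra.
  - intros x Hx. assert (0 < Rmin 1 r) by (apply Rmin_glb_lt; lra).
    apply continuity_pt_filterlim, (@ex_derive_continuous R_AbsRing R_NormedModule). eexists. apply Qf_d; auto. lra.
  - lra.
Qed.

Lemma Qf_sol l (hl : l^4 - 5/2*l^2 + 9/16 = 0) r : 0 < r ->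
  u3 r + l*u2 r + (l^2-5/2)*u1 r + (l^3-5/2*l)*u0 r = Qf l 1 * exp (l * r).
Proof. intros Hr. rewrite <- (Qf_const l hl r Hr). unfold Qf.
  assert (exp (l*r) * exp (-(l*r)) = 1) as HE by (rewrite <- exp_plus, Rplus_opp_r, exp_0; auto).
  set (E1 := exp (l*r)) in *. set (E2 := exp (-(l*r))) in *.
  match goal with |- ?S = _ => replace (E2 * S * E1) with (S * (E1 * E2)) by ring end.
  rewrite HE. ring.
Qed.

Lemma u_repr : exists a b c d, forall r, 0 < r ->
  u0 r = a * exp (3/2*r) + b * exp (1/2*r) + c * exp (-1/2*r) + d * exp (-3/2*r) /\
  u1 r = a * (3/2) * exp (3/2*r) + b * (1/2) * exp (1/2*r) + c * (-1/2) * exp (-1/2*r) + d * (-3/2) * exp (-3/2*r) /\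
  u2 r = a * (9/4) * exp (3/2*r) + b * (1/4) * exp (1/2*r) + c * (1/4) * exp (-1/2*r) + d * (9/4) * exp (-3/2*r) /\
  u3 r = a * (27/8) * exp (3/2*r) + b * (1/8) * exp (1/2*r) + c * (-1/8) * exp (-1/2*r) + d * (-27/8) * exp (-3/2*r).
Proof.
  exists (Qf (3/2) 1 / 6), (Qf (1/2) 1 / (-2)), (Qf (-1/2) 1 / 2), (Qf (-3/2) 1 / (-6)).
  intros r Hr.
  pose proof (Qf_sol (3/2) ltac:(field) r Hr) as A.
  pose proof (Qf_sol (1/2) ltac:(field) r Hr) as B.
  pose proof (Qf_sol (-1/2) ltac:(field) r Hr) as C.
  pose proof (Qf_sol (-3/2) ltac:(field) r Hr) as D.
  set (XA := Qf (3/2) 1 * exp (3/2*r)) in *.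
  set (XB := Qf (1/2) 1 * exp (1/2*r)) in *.
  set (XC := Qf (-1/2) 1 * exp (-1/2*r)) in *.
  set (XD := Qf (-3/2) 1 * exp (-3/2*r)) in *.
  cbn [pow] in A, B, C, D.
  repeat split.
  - transitivity (XA/6 + XB/(-2) + XC/2 + XD/(-6)); [lra | unfold XA, XB, XC, XD; field].
  - transitivity (3/2*XA/6 + 1/2*XB/(-2) + -1/2*XC/2 + -3/2*XD/(-6)); [lra | unfold XA, XB, XC, XD; field].
  - transitivity (9/4*XA/6 + 1/4*XB/(-2) + 1/4*XC/2 + 9/4*XD/(-6)); [lra | unfold XA, XB, XC, XD; field].
  - transitivity (27/8*XA/6 + 1/8*XB/(-2) + -1/8*XC/2 + -27/8*XD/(-6)); [lra | unfold XA, XB, XC, XD; field].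
Qed.
End O.


Lemma L2_kill (f : R -> R) : ex_RInt_gen f (at_point 1) (Rbar_locally p_infty) ->
  (forall r, 0 <= f r) -> forall R0, 1 <= R0 -> ~ (forall r, R0 <= r -> 1 <= f r).
Proof.
  intros [l Hl] Hpos R0 HR0 Hbig.
  assert (Hb := Hl (ball l (mkposreal 1 Rlt_0_1)) (locally_ball l (mkposreal 1 Rlt_0_1))).
  destruct Hb as [Q Rr HQ HR Hprod].
  destruct HR as [M HM].
  set (b := Rmax M (R0 + Rabs l + 2) + 1).
  assert (Mb : M < b) by (unfold b; pose proof (Rmax_l M (R0 + Rabs l + 2)); lra).
  assert (Rb : R0 + Rabs l + 2 < b) by (unfold b; pose proof (Rmax_r M (R0 + Rabs l + 2)); lra).
  destruct (Hprod 1 b HQ (HM b Mb)) as [y [Hy1 Hy2]].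
  simpl in Hy1.
  change (Rabs (y - l) < 1) in Hy2.
  pose proof (Rabs_pos l) as Hlpos.
  assert (Hex : ex_RInt f 1 b) by (exists y; auto).
  assert (E1 : ex_RInt f 1 R0) by (apply (@ex_RInt_Chasles_1 R_CompleteNormedModule) with b; [split; lra | exact Hex]).
  assert (E2 : ex_RInt f R0 b) by (apply (@ex_RInt_Chasles_2 R_CompleteNormedModule) with 1; [split; lra | exact Hex]).
  assert (Hy : y = RInt f 1 R0 + RInt f R0 b).
  { transitivity (RInt f 1 b). symmetry; apply is_RInt_unique; auto. rewrite <- (@RInt_Chasles R_CompleteNormedModule f 1 R0 b); auto. }
  assert (I1 : 0 <= RInt f 1 R0) by (apply RInt_ge_0; auto; lra).
  assert (I2 : RInt (fun _ => 1) R0 b <= RInt f R0 b).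
  { apply RInt_le; auto. lra. apply ex_RInt_const. intros x Hx. apply Hbig. lra. }
  rewrite (@RInt_const R_CompleteNormedModule) in I2. unfold scal in I2; simpl in I2. unfold mult in I2; simpl in I2.
  pose proof (Rabs_le_between' y l 1) as _.
  apply Rabs_def2 in Hy2. pose proof (Rle_abs l). lra.
Qed.

Lemma grow_t A B C D : (A <> 0 \/ B <> 0) -> exists T, 1 <= T /\ forall t, T <= t ->
  1 <= (A * t^3 + B * t + C / t + D / t^3)^2.
Proof.
  intros HAB.
  assert (key : forall v, 1 <= Rabs v -> 1 <= v^2).
  { intros v Hv. rewrite <- pow2_abs. nra. }
  assert (bnd : forall t, 1 <= t -> Rabs (C / t + D / t^3) <= Rabs C + Rabs D).
  { intros t Ht. eapply Rle_trans. apply Rabs_triang.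
    unfold Rdiv. rewrite !Rabs_mult.
    assert (0 < t^3) by (apply pow_lt; lra).
    rewrite !Rabs_inv, (Rabs_pos_eq t), (Rabs_pos_eq (t^3)) by lra.
    assert (/ t <= 1) by (rewrite <- Rinv_1; apply Rinv_le_contravar; lra).
    assert (1 <= t^3) by (replace 1 with (1^3) by ring; apply pow_incr; lra).
    assert (/ t^3 <= 1) by (rewrite <- Rinv_1; apply Rinv_le_contravar; lra).
    assert (0 < / t) by (apply Rinv_0_lt_compat; lra).
    assert (0 < / t^3) by (apply Rinv_0_lt_compat; lra).
    pose proof (Rabs_pos C). pose proof (Rabs_pos D). nra. }
  destruct (Req_dec A 0) as [HA | HA].
  - destruct HAB as [HAB | HB]; [contradiction|].
    pose proof (Rabs_pos_lt B HB).
    set (K := Rabs C + Rabs D).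
    exists ((K + 1) / Rabs B + 1). split.
    { assert (0 <= (K+1)/Rabs B) by (unfold K; apply Rdiv_le_0_compat; [pose proof (Rabs_pos C); pose proof (Rabs_pos D); lra | lra]). lra. }
    intros t Ht. apply key. subst A.
    assert (1 <= t) by (assert (0 <= (K+1)/Rabs B) by (unfold K; apply Rdiv_le_0_compat; [pose proof (Rabs_pos C); pose proof (Rabs_pos D); lra | lra]); lra).
    match goal with H : 1 <= t |- _ => pose proof (bnd t H) end.
    assert (Rabs (B * t) = Rabs B * t) by (rewrite Rabs_mult, (Rabs_pos_eq t); lra).
    assert (Rabs B * t >= K + 1 + Rabs B).
    { assert (Rabs B * t >= Rabs B * ((K + 1) / Rabs B + 1)) as X1 by (apply Rle_ge, Rmult_le_compat_l; lra).
      replace (Rabs B * ((K + 1) / Rabs B + 1)) with (K + 1 + Rabs B) in X1 by (field; lra). lra. }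
    pose proof (Rabs_triang (0 * t^3 + B * t + C / t + D / t^3) (-(C / t + D / t^3))) as X2.
    replace (0 * t ^ 3 + B * t + C / t + D / t ^ 3 + - (C / t + D / t ^ 3)) with (B * t) in X2 by ring.
    rewrite Rabs_Ropp in X2. unfold K in *. lra.
  - pose proof (Rabs_pos_lt A HA).
    set (K := Rabs B + Rabs C + Rabs D).
    assert (0 <= K) by (unfold K; pose proof (Rabs_pos B); pose proof (Rabs_pos C); pose proof (Rabs_pos D); lra).
    assert (0 <= (K+1)/Rabs A) by (apply Rdiv_le_0_compat; lra).
    exists ((K + 1) / Rabs A + 1). split. lra.
    intros t Ht. apply key.
    assert (1 <= t) by lra.
    match goal with H : 1 <= t |- _ => pose proof (bnd t H) end.
    assert (Rabs (A * t^3) = Rabs A * t^3) by (rewrite Rabs_mult, (Rabs_pos_eq (t^3)); [lra| apply pow_le; lra]).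
    assert (Rabs (B * t) = Rabs B * t) by (rewrite Rabs_mult, (Rabs_pos_eq t); lra).
    assert (Rabs A * t >= K + 1) .
    { assert (Rabs A * t >= Rabs A * ((K + 1) / Rabs A + 1)) as X1 by (apply Rle_ge, Rmult_le_compat_l; lra).
      replace (Rabs A * ((K + 1) / Rabs A + 1)) with (K + 1 + Rabs A) in X1 by (field; lra). lra. }
    assert (Rabs A * t^3 >= (K + 1) * t).
    { replace (Rabs A * t^3) with ((Rabs A * t) * (t * t)) by ring.
      assert (t * t >= t) by nra. assert (0 <= K + 1) by lra. nra. }
    pose proof (Rabs_triang (A * t^3 + B * t + C / t + D / t^3) (-(B * t + (C / t + D / t^3)))) as X2.
    replace (A * t ^ 3 + B * t + C / t + D / t ^ 3 + - (B * t + (C / t + D / t ^ 3))) with (A * t^3) in X2 by ring.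
    rewrite Rabs_Ropp in X2.
    pose proof (Rabs_triang (B * t) (C / t + D / t ^ 3)).
    assert (Rabs C + Rabs D <= (Rabs C + Rabs D) * t) by (pose proof (Rabs_pos C); pose proof (Rabs_pos D); nra).
    unfold K in *. nra.
Qed.

Lemma exp_32 r : exp (3/2*r) = exp (1/2*r) ^ 3.
Proof. replace (3/2*r) with (1/2*r + 1/2*r + 1/2*r) by field. rewrite !exp_plus. ring. Qed.
Lemma exp_m12 r : exp (-1/2*r) = / exp (1/2*r).
Proof. rewrite <- exp_Ropp. replace (-(1/2*r)) with (-1/2*r) by field. reflexivity. Qed.
Lemma exp_m32 r : exp (-3/2*r) = / exp (1/2*r) ^ 3.
Proof. rewrite <- exp_32, <- exp_Ropp. replace (-(3/2*r)) with (-3/2*r) by field. reflexivity. Qed.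

Lemma grow_r A B C D : (A <> 0 \/ B <> 0) -> exists R0, 1 <= R0 /\ forall r, R0 <= r ->
  1 <= (A * exp (3/2*r) + B * exp (1/2*r) + C * exp (-1/2*r) + D * exp (-3/2*r))^2.
Proof.
  intros HAB. destruct (grow_t A B C D HAB) as [T [HT HTt]].
  exists (Rmax 1 (2 * ln T)). split. apply Rmax_l.
  intros r Hr. rewrite exp_32, exp_m12, exp_m32.
  apply HTt.
  assert (2 * ln T <= r) by (eapply Rle_trans; [apply Rmax_r | exact Hr]).
  rewrite <- (exp_ln T) by lra.
  destruct (Req_dec (ln T) (1/2*r)) as [E|E]. rewrite E; lra.
  left. apply exp_increasing. lra.
Qed.

Lemma at0 C D M : (forall r, 0 < r <= 1 -> Rabs (C * exp (-1/2*r) + D * exp (-3/2*r)) <= M * sinh r) -> C + D = 0.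
Proof.
  intros Hb.
  set (F := fun r => (C * exp (-1/2*r) + D * exp (-3/2*r))^2 - (M * sinh r)^2).
  assert (HF : forall r, 0 < r <= 1 -> F r <= 0).
  { intros r Hr. unfold F. pose proof (Hb r Hr) as X. pose proof (Rabs_pos (C * exp (-1/2*r) + D * exp (-3/2*r))).
    rewrite <- (pow2_abs (C * exp (-1/2*r) + D * exp (-3/2*r))). nra. }
  assert (F0 : F 0 = (C + D)^2).
  { unfold F. replace (-1/2*0) with 0 by ring. replace (-3/2*0) with 0 by ring.
    rewrite exp_0. unfold sinh. rewrite Ropp_0, exp_0. field. }
  destruct (Req_dec ((C+D)^2) 0) as [Z|Z].
  { simpl in Z. nra. }
  exfalso.
  assert (Hc : continuity_pt F 0).
  { apply continuity_pt_filterlim, (@ex_derive_continuous R_AbsRing R_NormedModule).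
    unfold F. auto_derive. auto. }
  assert (Hpos : 0 < (C+D)^2) by (pose proof (pow2_ge_0 (C+D)); lra).
  destruct (Hc ((C+D)^2) Hpos) as [alp [Ha Hd]].
  set (x := Rmin (alp/2) 1).
  assert (0 < x) by (unfold x; apply Rmin_glb_lt; lra).
  assert (x <= 1) by apply Rmin_r.
  assert (x <= alp/2) by apply Rmin_l.
  assert (Hx := Hd x).
  simpl in Hx. unfold R_dist, D_x, no_cond in Hx.
  rewrite F0 in Hx.
  assert (F x <= 0) by (apply HF; lra).
  assert (Rabs (F x - (C+D)^2) < (C+D)^2) as Hfin.
  { apply Hx. split. split. auto. lra. rewrite Rminus_0_r, Rabs_pos_eq; lra. }
  apply Rabs_def2 in Hfin. lra.
Qed.


Lemma chain (g : R -> R) (Hd : forall n r, 0 < r -> ex_derive_n g n r) k r :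
  0 < r -> is_derive (Derive_n g k) r (Derive_n g (S k) r).
Proof. intros Hr. apply Derive_correct. exact (Hd (S k) r Hr). Qed.

Lemma cosh_pos y : 0 < cosh y.
Proof. unfold cosh. pose proof (exp_pos y). pose proof (exp_pos (-y)). lra. Qed.

Lemma exp_half_gt1 r : 0 < r -> 1 < exp (1/2*r).
Proof. intros. pose proof (exp_increasing 0 (1/2*r)) as X. rewrite exp_0 in X. apply X; lra. Qed.

Theorem mainTheorem4 (g : R -> R) :
  is_green_P2 g ->
  (forall r : R, 0 < r -> 0 < g r) /\
  (forall r1 r2 : R, 0 < r1 -> r1 < r2 -> g r2 < g r1).
Proof.
  intros [Hd [HP [[M HM] [Hflux HL2]]]].
  set (G := fun k => Derive_n g k).
  assert (dk : forall k r, 0 < r -> is_derive (G k) r (G (S k) r)) by (intros; apply chain; auto).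
  pose proof (dk 0%nat) as d0. pose proof (dk 1%nat) as d1.
  pose proof (dk 2%nat) as d2. pose proof (dk 3%nat) as d3.
  assert (ode : forall r, 0 < r -> U4 (G 0%nat) (G 1%nat) (G 2%nat) (G 3%nat) (G 4%nat) r
     - 5/2 * U2 (G 0%nat) (G 1%nat) (G 2%nat) r + 9/16 * U0 (G 0%nat) r = 0).
  { intros r Hr. rewrite <- key_id by auto. rewrite <- (P1hh _ _ _ _ _ d0 d1 d2 d3) by auto.
    replace (P1 (hh (G 0%nat) (G 1%nat) (G 2%nat)) r) with (P2 g r) by reflexivity.
    rewrite HP by auto. ring. }
  destruct (u_repr _ _ _ _ _ (U0_d _ _ d0) (U1_d _ _ _ d0 d1) (U2_d _ _ _ _ d0 d1 d2) (U3_d _ _ _ _ _ d0 d1 d2 d3) ode)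
    as [a [b [c [d Hrep]]]].
  assert (HU0 : forall r, U0 (G 0%nat) r = sinh r * g r) by reflexivity.
  assert (Hab : a = 0 /\ b = 0).
  { destruct (Req_dec a 0) as [Ha|Ha]; destruct (Req_dec b 0) as [Hb|Hb]; try (split; assumption);
    exfalso; (destruct (grow_r a b c d) as [R0 [HR0 Hbig]]; [tauto|]);
    apply (L2_kill _ HL2) with R0; auto.
    all: try (intros r; apply Rmult_le_pos; apply pow2_ge_0).
    all: intros r Hr; replace (g r ^ 2 * sinh r ^ 2) with ((sinh r * g r)^2) by ring;
      rewrite <- HU0; destruct (Hrep r ltac:(lra)) as [E _]; rewrite E; apply Hbig; auto. }
  destruct Hab as [Ha Hb]. subst a b.
  assert (Hcd : c + d = 0).
  { apply (at0 c d M). intros r Hr.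
    destruct (Hrep r ltac:(lra)) as [E _].
    replace (c * exp (-1/2*r) + d * exp (-3/2*r)) with (U0 (G 0%nat) r) by (rewrite E; ring).
    rewrite HU0, Rabs_mult, (Rabs_pos_eq (sinh r)) by (left; apply sinh_pos; lra).
    rewrite Rmult_comm. apply Rmult_le_compat_r. left; apply sinh_pos; lra. apply HM; auto. }
  assert (Hd' : d = - c) by lra. subst d.
  assert (Hc : 0 < c).
  { assert (Hb := Hflux (ball 1 (mkposreal (1/2) ltac:(lra))) (locally_ball 1 (mkposreal (1/2) ltac:(lra)))).
    destruct Hb as [del Hdel].
    set (r := del / 2).
    assert (Hr : 0 < r) by (unfold r; destruct del; simpl; lra).
    assert (Hball : ball 0 del r).
    { change (Rabs (r - 0) < del). rewrite Rminus_0_r, Rabs_pos_eq by lra. unfold r; destruct del; simpl; lra. }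
    specialize (Hdel r Hball Hr).
    change (Rabs (4 * PI * sinh r ^ 2 * Derive (radial_lap g) r - 1) < 1/2) in Hdel.
    apply Rabs_def2 in Hdel.
    assert (HD : Derive (radial_lap g) r = LL (G 1%nat) (G 2%nat) (G 3%nat) r).
    { apply is_derive_unique. exact (rl_d _ _ _ d1 d2 r Hr). }
    rewrite HD in Hdel.
    assert (Hfl : 4 * PI * sinh r ^ 2 * LL (G 1%nat) (G 2%nat) (G 3%nat) r =
       4 * PI * c * ((3/8 * exp (-1/2*r) + 15/8 * exp (-3/2*r)) * sinh r + (3/4 * exp (-1/2*r) + 5/4 * exp (-3/2*r)) * cosh r)).
    { rewrite Rmult_assoc, (flux_id (G 0%nat)) by auto.
      destruct (Hrep r Hr) as [E0 [E1 [E2 E3]]]. rewrite E0, E1, E2, E3. field. }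
    rewrite Hfl in Hdel.
    assert (0 < (3/8 * exp (-1/2*r) + 15/8 * exp (-3/2*r)) * sinh r + (3/4 * exp (-1/2*r) + 5/4 * exp (-3/2*r)) * cosh r).
    { pose proof (exp_pos (-1/2*r)). pose proof (exp_pos (-3/2*r)). pose proof (sinh_pos r Hr). pose proof (cosh_pos r). nra. }
    pose proof PI_RGT_0.
    destruct (Rle_lt_dec c 0) as [Hc|Hc]; auto.
    exfalso. assert (4 * PI * c * ((3/8 * exp (-1/2*r) + 15/8 * exp (-3/2*r)) * sinh r + (3/4 * exp (-1/2*r) + 5/4 * exp (-3/2*r)) * cosh r) <= 0).
    { set (P := (3/8 * exp (-1/2*r) + 15/8 * exp (-3/2*r)) * sinh r + (3/4 * exp (-1/2*r) + 5/4 * exp (-3/2*r)) * cosh r) in *.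
      assert (0 <= 4 * PI * P) by nra. nra. }
    lra. }
  assert (Hg : forall r, 0 < r -> g r = 2 * c / (exp (1/2*r) ^ 3 + exp (1/2*r))).
  { intros r Hr. pose proof (sinh_pos r Hr) as Hs.
    destruct (Hrep r Hr) as [E0 _]. rewrite HU0 in E0.
    assert (g r = (0 * exp (3 / 2 * r) + 0 * exp (1 / 2 * r) + c * exp (-1 / 2 * r) + - c * exp (-3 / 2 * r)) / sinh r) as E
      by (rewrite <- E0; field; lra).
    rewrite E. rewrite exp_m12, exp_m32.
    assert (sinh r = (exp (1/2*r) ^ 2 - / exp (1/2*r) ^ 2) / 2) as ES.
    { unfold sinh. rewrite exp_Ropp. assert (exp r = exp (1/2*r) * exp (1/2*r)) as Er by (rewrite <- exp_plus; f_equal; field). rewrite Er. field. apply Rgt_not_eq, exp_pos. }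
    rewrite ES. pose proof (exp_half_gt1 r Hr).
    set (t := exp (1/2*r)) in *.
    field. repeat split; try lra.
    all: try (apply Rgt_not_eq; apply Rlt_gt; nra).
     assert (1 < t*t) by nra. assert (1 < (t*t)^2) by (simpl; nra). lra. }
  split.
  - intros r Hr. rewrite Hg by auto. pose proof (exp_half_gt1 r Hr).
    apply Rdiv_lt_0_compat; [clear -Hc; lra | set (t := exp (1/2*r)) in *; clear -H; nra].
  - intros r1 r2 H1' H12. rewrite !Hg by lra.
    pose proof (exp_half_gt1 r1 H1') as Ht1.
    assert (exp (1/2*r1) < exp (1/2*r2)) as Ht12 by (apply exp_increasing; lra).
    set (t1 := exp (1/2*r1)) in *. set (t2 := exp (1/2*r2)) in *.
    unfold Rdiv. apply Rmult_lt_compat_l. lra.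
    assert (1 < t2) as Ht2 by lra.
    assert (0 < t1 ^ 3 + t1) by (clear -Ht1; simpl; nra).
    assert (0 < t2 ^ 3 + t2) by (clear -Ht2; simpl; nra).
    assert (t1 ^ 3 < t2 ^ 3) by (clear -Ht1 Ht12; simpl; assert (t1*t1 < t2*t2) by nra; nra).
    apply Rinv_lt_contravar. apply Rmult_lt_0_compat; lra. lra.
Qed.
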